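(* Consider the setting in the context and the linear system $$\dot q_2=-J_2q_2+\tilde\kappa\left(TP_{\mathcal{S}^\perp}\tilde M B^TT^{-1}\right)_{(n-2\times n-2)}q_2,\qquad q_2\in\mathbb{C}^{n-2}.$$ Let $Q\in\mathbb{C}^{(n-2)\times(n-2)}$ be a Hermitian positive definite matrix with $QJ_2+J_2^HQ\succeq 2I_{n-2}$ ($X^H$ the conjugate transpose). If $$0\le\tilde\kappa<\Big(\big\|Q\left(T\tilde MB^TT^{-1}\right)_{(n-2\times n-2)}\big\|_2\Big)^{-1},$$ then this system is exponentially stable.
   Context: Let $n\ge 3$ agents on an undirected graph $\mathcal{G}=(\mathcal{V},\mathcal{E})$, $\mathcal{V}=\{1,\dots,n\}$, $\mathcal{N}_i=\{j:(i,j)\in\mathcal{E}\}$. Let $p^*\in\mathbb{C}^n$ be a reference shape (not a multiple of the all-ones vector $\mathbf{1}_n$), and let $L$ be the complex Laplacian with nonzero weights $\omega_{ij}$ ($L_{ii}=\sum_{k\in\mathcal{N}_i}\omega_{ik}$, $L_{ij}=-\omega_{ij}$ for $j\in\mathcal{N}_i$, $0$ otherwise) satisfying $\sum_{j\in\mathcal{N}_i}\omega_{ij}(p^*_i-p^*_j)=0$ for all $i$, with $0$ an eigenvalue of $L$ of algebraic and geometric multiplicity 2 and eigenspace $\mathcal{S}=\operatorname{span}\{\mathbf{1}_n,p^*\}$. Let $K=\operatorname{diag}(k_i)$, $k_i\in\mathbb{C}\setminus\{0\}$, be such that all eigenvalues of $KL$ other than the two zero eigenvalues have positive real part, so $\operatorname{Ker}(KL)=\mathcal{S}$.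 Let $J=TKLT^{-1}=\operatorname{diag}(J_1,J_2)$ be a Jordan form of $KL$ with invertible $T$, where $J_1=0\in\mathbb{C}^{2\times2}$ corresponds to the zero eigenvalues and $J_2\in\mathbb{C}^{(n-2)\times(n-2)}$ (so $-J_2$ is Hurwitz). Let $\mathcal{S}^\perp$ be the orthogonal complement of $\operatorname{Ker}(KL)$ and $P_{\mathcal{S}^\perp}$ the orthogonal projection onto it. Let $B$ be the incidence matrix of an orientation of $\mathcal{G}$ ($b_{ik}=+1$ if $i$ is the tail of edge $k$, $-1$ if $i$ is its head, $0$ otherwise) and $\tilde M=\kappa_tM_t+\kappa_rM_r+\kappa_sM_s$ with fixed $\kappa_t,\kappa_r,\kappa_s>0$, where for motion parameters $\mu_{ij}\in\mathbb{C}$ ($\mu_{ij}=0$ if $j\notin\mathcal{N}_i$) the matrix $M$ has entries $m_{ik}=\mu_{i,\mathrm{head}_k}$ if $i$ is the tail of edge $k$, $m_{ik}=-\mu_{i,\mathrm{tail}_k}$ if $i$ is its head, $0$ otherwise, so that $(MB^Tx)_i=\sum_{j\in\mathcal{N}_i}\mu_{ij}(x_i-x_j)$; $M_t,M_r,M_s$ are built from translation, rotation and scaling parameters satisfying $M_tB^Tp^*=v^*\mathbf{1}_n$, $M_rB^Tp^*=\iota\omega p^*$, $M_sB^Tp^*=ap^*$ for given $v^*\in\mathbb{C}$, $a,\omega\in\mathbb{R}$. For $X\in\mathbb{C}^{n\times n}$, $(X)_{(n-2\times n-2)}$ denotes the submatrix obtained by deleting the first two rows and the first two columns. $\|\cdot\|_2$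 is the spectral norm. *)

(* Defs.v *)
From HB Require Import structures.
From mathcomp Require Import all_boot all_order all_algebra.
From mathcomp Require Import complex.
From mathcomp Require Import all_classical all_reals all_analysis.
From mathcomp Require Import zify.
Set Implicit Arguments.
Unset Strict Implicit.
Unset Printing Implicit Defensive.
Import Order.TTheory GRing.Theory Num.Theory.
Local Open Scope ring_scope.

Section Defs.
Variable R : realType.
Local Notation C := R[i].

Definition ctr (m k : nat) (X : 'M[C]_(m, k)) : 'M[C]_(k, m) :=
  (map_mx (@conjc R) X)^T.

Definition vnorm (m : nat) (x : 'cV[C]_m) : R :=
  Num.sqrt (\sum_i ((@complex.Re R (x i 0)) ^+ 2 + (@complex.Im R (x i 0)) ^+ 2)).

Definition specnorm (m : nat) (X : 'M[C]_m) : R :=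
  sup [set vnorm (X *m x) | x in [set x : 'cV[C]_m | vnorm x <= 1]].

(* Hermitian positive definite / positive semidefinite; the order on C is the
   standard partial order of the numClosedField R[i] (0 <= z iff z real >= 0) *)
Definition hermitian (m : nat) (X : 'M[C]_m) := ctr X = X.
Definition posdef (m : nat) (X : 'M[C]_m) :=
  hermitian X /\ forall x : 'cV[C]_m, x != 0 -> 0 < (ctr x *m X *m x) 0 0.
Definition psd (m : nat) (X : 'M[C]_m) :=
  hermitian X /\ forall x : 'cV[C]_m, 0 <= (ctr x *m X *m x) 0 0.
Definition loewner_ge (m : nat) (X Y : 'M[C]_m) := psd (X - Y).

Definition is_jordan (m : nat) (J : 'M[C]_m) :=
  (forall i j : 'I_m, (j : nat) != i -> (j : nat) != i.+1 -> J i j = 0) /\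
  (forall i j : 'I_m, (j : nat) = i.+1 ->
      (J i j = 0 \/ (J i j = 1 /\ J i i = J j j))).

Lemma lt_sub2 (n : nat) (i : 'I_(n - 2)) : (i + 2 < n)%N.
Proof. have := ltn_ord i; lia. Qed.
Definition sh2 (n : nat) (i : 'I_(n - 2)) : 'I_n := Ordinal (lt_sub2 i).
Definition sub2 (n : nat) (X : 'M[C]_n) : 'M[C]_(n - 2) :=
  \matrix_(i, j) X (sh2 i) (sh2 j).

Definition claplacian (n : nat) (adj : rel 'I_n) (w : 'I_n -> 'I_n -> C)
  : 'M[C]_n :=
  \matrix_(i, j) if i == j then \sum_(k | adj i k) w i k
                 else if adj i j then - w i j else 0.

Definition incidence (n e : nat) (tl hd : 'I_e -> 'I_n) : 'M[C]_(n, e) :=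
  \matrix_(i, k) (if i == tl k then 1 else if i == hd k then -1 else 0).

Definition motionM (n e : nat) (tl hd : 'I_e -> 'I_n) (mu : 'I_n -> 'I_n -> C)
  : 'M[C]_(n, e) :=
  \matrix_(i, k) (if i == tl k then mu i (hd k)
                  else if i == hd k then - mu i (tl k) else 0).

Definition orientation (n e : nat) (adj : rel 'I_n) (tl hd : 'I_e -> 'I_n) :=
  (forall k, adj (tl k) (hd k)) /\
  (forall i j, adj i j -> exists! k, (tl k = i /\ hd k = j) \/ (tl k = j /\ hd k = i)).

Definition is_solution (m : nat) (A : 'M[C]_m) (q : R -> 'cV[C]_m) :=
  forall (t : R) (i : 'I_m),
    is_derive t 1 (fun s => @complex.Re R (q s i 0)) (@complex.Re R ((A *m q t) i 0)) /\
    is_derive t 1 (fun s => @complex.Im R (q s i 0)) (@complex.Im R ((A *m q t) i 0)).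

Definition exp_stable (m : nat) (A : 'M[C]_m) :=
  exists c lam : R, 0 < c /\ 0 < lam /\
    forall q, is_solution A q ->
      forall t : R, 0 <= t -> vnorm (q t) <= c * expR (- (lam * t)) * vnorm (q 0).

End Defs.

(* Main.v *)
Require Import Defs.
From HB Require Import structures.
From mathcomp Require Import all_boot all_order all_algebra.
From mathcomp Require Import complex.
From mathcomp Require Import all_classical all_reals all_analysis.
From mathcomp Require Import ring lra.
Import Order.TTheory GRing.Theory Num.Theory.
Set Implicit Arguments.
Unset Strict Implicit.
Unset Printing Implicit Defensive.
Local Open Scope ring_scope.

Section Aux.
Variable R : realType.
Local Notation C := R[i].

Definition nsq m (x : 'cV[C]_m) : R :=
  \sum_i ((complex.Re (x i 0)) ^+ 2 + (complex.Im (x i 0)) ^+ 2).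
Definition ip m (x y : 'cV[C]_m) : R :=
  \sum_i (complex.Re (x i 0) * complex.Re (y i 0) + complex.Im (x i 0) * complex.Im (y i 0)).

Lemma ReM (a b : C) : complex.Re (a * b) = complex.Re a * complex.Re b - complex.Im a * complex.Im b.
Proof. by case: a => ? ?; case: b. Qed.
Lemma ImM (a b : C) : complex.Im (a * b) = complex.Re a * complex.Im b + complex.Im a * complex.Re b.
Proof. by case: a => ? ?; case: b. Qed.
Lemma ReD (a b : C) : complex.Re (a + b) = complex.Re a + complex.Re b.
Proof. by case: a => ? ?; case: b. Qed.
Lemma ImD (a b : C) : complex.Im (a + b) = complex.Im a + complex.Im b.
Proof. by case: a => ? ?; case: b. Qed.
Lemma ReN (a : C) : complex.Re (- a) = - complex.Re a.
Proof. by case: a. Qed.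
Lemma ImN (a : C) : complex.Im (- a) = - complex.Im a.
Proof. by case: a. Qed.
Lemma Re0 : complex.Re (0 : C) = 0. Proof. by []. Qed.
Lemma Im0 : complex.Im (0 : C) = 0. Proof. by []. Qed.
Lemma Re_sum (I : Type) (r : seq I) (P : pred I) (F : I -> C) :
  complex.Re (\sum_(i <- r | P i) F i) = \sum_(i <- r | P i) complex.Re (F i).
Proof. by elim/big_rec2: _ => // i y1 y2 _ <-; rewrite ReD. Qed.
Lemma Im_sum (I : Type) (r : seq I) (P : pred I) (F : I -> C) :
  complex.Im (\sum_(i <- r | P i) F i) = \sum_(i <- r | P i) complex.Im (F i).
Proof. by elim/big_rec2: _ => // i y1 y2 _ <-; rewrite ImD. Qed.
Lemma Re_conjM (a b : C) : complex.Re (conjc a * b) = complex.Re a * complex.Re b + complex.Im a * complex.Im b.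
Proof. case: a => ? ?; case: b => ? ? /=; ring. Qed.
Lemma ReRC (r : R) (a : C) : complex.Re (r%:C%C * a) = r * complex.Re a.
Proof. case: a => ? ? /=; ring. Qed.
Lemma ImRC (r : R) (a : C) : complex.Im (r%:C%C * a) = r * complex.Im a.
Proof. case: a => ? ? /=; ring. Qed.

Lemma ctrM a b c (A : 'M[C]_(a, b)) (B : 'M[C]_(b, c)) :
  ctr (A *m B) = ctr B *m ctr A.
Proof. by rewrite /ctr map_mxM trmx_mul. Qed.

Lemma ctr_ctr a b (A : 'M[C]_(a, b)) : ctr (ctr A) = A.
Proof. by apply/matrixP => i j; rewrite /ctr !mxE conjcK. Qed.

Lemma ipE m (x y : 'cV[C]_m) : ip x y = complex.Re ((ctr x *m y) 0 0).
Proof.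
rewrite mxE Re_sum /ip; apply: eq_bigr => i _; by rewrite /ctr !mxE Re_conjM.
Qed.

Lemma ip_sym m (x y : 'cV[C]_m) : ip x y = ip y x.
Proof. by apply: eq_bigr => i _; ring. Qed.

Lemma ip_self m (x : 'cV[C]_m) : ip x x = nsq x.
Proof. by apply: eq_bigr => i _; rewrite !expr2. Qed.

Lemma nsq_ge0 m (x : 'cV[C]_m) : 0 <= nsq x.
Proof. by apply: sumr_ge0 => i _; rewrite addr_ge0 // sqr_ge0. Qed.

Lemma ipD m (x y z : 'cV[C]_m) : ip x (y + z) = ip x y + ip x z.
Proof. rewrite /ip -big_split /=; apply: eq_bigr => i _; rewrite !mxE ReD ImD; ring. Qed.
Lemma ipN m (x y : 'cV[C]_m) : ip x (- y) = - ip x y.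
Proof. rewrite /ip -sumrN; apply: eq_bigr => i _; rewrite !mxE ReN ImN; ring. Qed.
Lemma ipZ m (x y : 'cV[C]_m) (r : R) : ip x (r%:C%C *: y) = r * ip x y.
Proof. rewrite /ip mulr_sumr; apply: eq_bigr => i _; rewrite !mxE ReRC ImRC; ring. Qed.

Lemma ip_ctr m (M : 'M[C]_m) (x y : 'cV[C]_m) : ip x (ctr M *m y) = ip (M *m x) y.
Proof. by rewrite !ipE ctrM mulmxA. Qed.

Lemma ip_herm m (M : 'M[C]_m) (x y : 'cV[C]_m) : Defs.hermitian M -> ip x (M *m y) = ip (M *m x) y.
Proof. by move=> hM; rewrite -ip_ctr hM. Qed.

Lemma amgm m (x y : 'cV[C]_m) (s : R) : 0 < s -> 2 * ip x y <= s * nsq x + nsq y / s.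
Proof.
move=> s0; rewrite /ip /nsq mulr_sumr mulr_sumr mulr_suml -big_split /=.
apply: ler_sum => i _.
set a := complex.Re (x i 0); set b := complex.Re (y i 0).
set c := complex.Im (x i 0); set d := complex.Im (y i 0).
have h1 : 0 <= (s * a - b) ^+ 2 + (s * c - d) ^+ 2 by rewrite addr_ge0 // sqr_ge0.
have -> : s * (a ^+ 2 + c ^+ 2) + (b ^+ 2 + d ^+ 2) / s
   = 2 * (a * b + c * d) + ((s * a - b) ^+ 2 + (s * c - d) ^+ 2) / s.
  by field; rewrite gt_eqF.
by rewrite lerDl divr_ge0 // ltW.
Qed.


Lemma nsqZ m (x : 'cV[C]_m) (r : R) : nsq (r%:C%C *: x) = r ^+ 2 * nsq x.
Proof.
rewrite /nsq mulr_sumr; apply: eq_bigr => i _.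
by rewrite !mxE -!/(_ * _) ReRC ImRC; ring.
Qed.

Lemma vnormE m (x : 'cV[C]_m) : vnorm x = Num.sqrt (nsq x).
Proof. by []. Qed.

Lemma vnormZ m (x : 'cV[C]_m) (r : R) : vnorm (r%:C%C *: x) = `|r| * vnorm x.
Proof. by rewrite !vnormE nsqZ sqrtrM ?sqr_ge0 // sqrtr_sqr. Qed.

Lemma nsq_eq0 m (x : 'cV[C]_m) : nsq x = 0 -> x = 0.
Proof.
move=> h; apply/matrixP => i j; rewrite ord1 mxE.
have /eqP := h; rewrite psumr_eq0 => [/allP /(_ i (mem_index_enum _))|j0 _]; last first.
  by rewrite addr_ge0 // sqr_ge0.
rewrite implyTb paddr_eq0 ?sqr_ge0 // !sqrf_eq0 => /andP[/eqP h1 /eqP h2].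
by apply/eqP; rewrite eq_complex h1 h2 /= !eqxx.
Qed.

Lemma nsq0 m : nsq (0 : 'cV[C]_m) = 0.
Proof. by rewrite /nsq big1 // => i _; rewrite mxE /= expr0n /= addr0. Qed.

Lemma nsq_comp m (x : 'cV[C]_m) j :
  (complex.Re (x j 0)) ^+ 2 + (complex.Im (x j 0)) ^+ 2 <= nsq x.
Proof.
rewrite /nsq (bigD1 j) //= lerDl; apply: sumr_ge0 => i _.
by rewrite addr_ge0 // sqr_ge0.
Qed.

Lemma abs_le1 (a : R) : a ^+ 2 <= 1 -> `|a| <= 1.
Proof.
move=> h; rewrite leNgt; apply/negP => h1.
have : 1 < `|a| ^+ 2 by rewrite expr_gt1 // ltr01 ?orbT.
by rewrite real_normK ?num_real // => /(le_lt_trans h); rewrite ltxx.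
Qed.

Definition bndK m (M : 'M[C]_m) : R :=
  \sum_i 2 * (\sum_j (`|complex.Re (M i j)| + `|complex.Im (M i j)|)) ^+ 2.

Lemma sq_le (a c : R) : `|a| <= c -> a ^+ 2 <= c ^+ 2.
Proof.
move=> h; rewrite -real_normK ?num_real // !expr2.
by apply: ler_pM => //.
Qed.

Lemma mx_bound m (M : 'M[C]_m) (x : 'cV[C]_m) : nsq x <= 1 -> nsq (M *m x) <= bndK M.
Proof.
move=> hx; rewrite /nsq /bndK; apply: ler_sum => i _.
set c := \sum_j _.
have hc : forall j, `|complex.Re (x j 0)| <= 1 /\ `|complex.Im (x j 0)| <= 1.
  move=> j; have := le_trans (nsq_comp x j) hx => h.
  split; apply: abs_le1; apply: le_trans h.
    by rewrite lerDl sqr_ge0.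
  by rewrite lerDr sqr_ge0.
have h1 : `|complex.Re ((M *m x) i 0)| <= c.
  rewrite mxE Re_sum; apply: le_trans (ler_norm_sum _ _ _) _.
  apply: ler_sum => j _; rewrite ReM.
  apply: le_trans (ler_normB _ _) _; rewrite !normrM.
  have [h2 h3] := hc j.
  by apply: lerD; rewrite ler_piMr.
have h2 : `|complex.Im ((M *m x) i 0)| <= c.
  rewrite mxE Im_sum; apply: le_trans (ler_norm_sum _ _ _) _.
  apply: ler_sum => j _; rewrite ImM.
  apply: le_trans (ler_normD _ _) _; rewrite !normrM.
  have [h2 h3] := hc j.
  by apply: lerD; rewrite ler_piMr.
rewrite mulr2n mulrDl mul1r.
by apply: lerD; apply: sq_le.
Qed.

Lemma specnorm_bound m (M : 'M[C]_m) (x : 'cV[C]_m) :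
  vnorm (M *m x) <= specnorm M * vnorm x.
Proof.
rewrite /specnorm; set E := (X in sup X).
have hub : ubound E (sup E).
  apply: ub_le_sup; exists (Num.sqrt (bndK M)) => y [z /= hz <-].
  rewrite vnormE ler_sqrt; last first.
    by apply: sumr_ge0 => i _; rewrite mulr_ge0 // sqr_ge0.
  apply: mx_bound.
  have := nsq_ge0 z => h0.
  by rewrite -(sqr_sqrtr h0) -vnormE -(expr1n _ 2) sq_le // ger0_norm // vnormE sqrtr_ge0.
have [x0|xn0] := eqVneq (nsq x) 0.
  have -> : vnorm x = 0 by rewrite vnormE x0 sqrtr0.
  by rewrite mulr0 (nsq_eq0 x0) mulmx0 vnormE nsq0 sqrtr0.
have hr : 0 < vnorm x by rewrite vnormE sqrtr_gt0 lt_neqAle eq_sym xn0 nsq_ge0.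
set x' := ((vnorm x)^-1)%:C%C *: x.
have hx' : vnorm x' <= 1.
  have hr' : 0 <= (vnorm x)^-1 by rewrite invr_ge0 ltW.
  by rewrite vnormZ ger0_norm // mulVf // gt_eqF.
have := hub _ (ex_intro2 _ _ x' hx' erefl).
have hr' : 0 <= (vnorm x)^-1 by rewrite invr_ge0 ltW.
rewrite /x' -scalemxAr vnormZ ger0_norm //.
by rewrite ler_pdivrMl // mulrC.
Qed.

Lemma specnorm_ge0 m (M : 'M[C]_m) : 0 <= specnorm M.
Proof.
rewrite /specnorm; set E := (X in sup X).
have hub : ubound E (sup E).
  apply: ub_le_sup; exists (Num.sqrt (bndK M)) => y [z /= hz <-].
  rewrite vnormE ler_sqrt; last first.
    by apply: sumr_ge0 => i _; rewrite mulr_ge0 // sqr_ge0.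
  apply: mx_bound.
  have := nsq_ge0 z => h0.
  by rewrite -(sqr_sqrtr h0) -vnormE -(expr1n _ 2) sq_le // ger0_norm // vnormE sqrtr_ge0.
have h0 : vnorm (0 : 'cV[C]_m) = 0 by rewrite vnormE nsq0 sqrtr0.
have h1 : E 0 by exists 0; rewrite /= ?h0 ?ler01 // mulmx0 h0.
exact: hub _ h1.
Qed.



Definition hasder m (q : R -> 'cV[C]_m) (t : R) (d : 'cV[C]_m) :=
  forall i, is_derive t (1:R) (fun s => complex.Re (q s i 0)) (complex.Re (d i 0)) /\
            is_derive t (1:R) (fun s => complex.Im (q s i 0)) (complex.Im (d i 0)).

Lemma der_lin (f g : R -> R) (df dg a b t : R) :
  is_derive t (1:R) f df -> is_derive t (1:R) g dg ->
  is_derive t (1:R) (fun s => a * f s + b * g s) (a * df + b * dg).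
Proof.
move=> hf hg.
have := is_deriveD (is_deriveZ a hf) (is_deriveZ b hg).
by [].
Qed.

Lemma der_prod (f g : R -> R) (df dg t : R) :
  is_derive t (1:R) f df -> is_derive t (1:R) g dg ->
  is_derive t (1:R) (fun s => f s * g s) (df * g t + f t * dg).
Proof.
move=> hf hg.
have := is_deriveM hf hg.
move=> h; apply: is_derive_eq h _.
change (f t * dg + g t * df = df * g t + f t * dg); ring.
Qed.


Lemma hasder_mul m (M : 'M[C]_m) (q : R -> 'cV[C]_m) t d :
  hasder q t d -> hasder (fun s => M *m q s) t (M *m d).
Proof.
move=> hq i; split.
- have -> : (fun s => complex.Re ((M *m q s) i 0)) =
     \sum_j (fun s => complex.Re (M i j) * complex.Re (q s j 0) + (- complex.Im (M i j)) * complex.Im (q s j 0)).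
    rewrite fct_sumE; apply/funext => s; rewrite mxE Re_sum; apply: eq_bigr => j _; rewrite ReM; ring.
  apply: is_derive_eq.
    by apply: is_derive_sum => j; apply: der_lin; [exact: (hq j).1 | exact: (hq j).2].
  by rewrite mxE Re_sum; apply: eq_bigr => j _; rewrite ReM; ring.
- have -> : (fun s => complex.Im ((M *m q s) i 0)) =
     \sum_j (fun s => complex.Im (M i j) * complex.Re (q s j 0) + complex.Re (M i j) * complex.Im (q s j 0)).
    rewrite fct_sumE; apply/funext => s; rewrite mxE Im_sum; apply: eq_bigr => j _; rewrite ImM; ring.
  apply: is_derive_eq.
    by apply: is_derive_sum => j; apply: der_lin; [exact: (hq j).1 | exact: (hq j).2].
  by rewrite mxE Im_sum; apply: eq_bigr => j _; rewrite ImM; ring.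
Qed.

Lemma hasder_ip m (x y : R -> 'cV[C]_m) t dx dy :
  hasder x t dx -> hasder y t dy ->
  is_derive t (1:R) (fun s => ip (x s) (y s)) (ip dx (y t) + ip (x t) dy).
Proof.
move=> hx hy.
have -> : (fun s => ip (x s) (y s)) =
   \sum_j (fun s => complex.Re (x s j 0) * complex.Re (y s j 0) + complex.Im (x s j 0) * complex.Im (y s j 0)).
  by rewrite fct_sumE; apply/funext => s.
apply: is_derive_eq.
  apply: is_derive_sum => j.
  apply: is_deriveD; apply: der_prod; [exact: (hx j).1 | exact: (hy j).1 | exact: (hx j).2 | exact: (hy j).2].
rewrite /ip -big_split /=; apply: eq_bigr => j _; ring.
Qed.


Lemma exd (f : R -> R) (x df : R) : is_derive x (1:R) f df -> derivable f x 1.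
Proof. by move=> H; exact: (@ex_derive _ _ _ _ _ _ _ H). Qed.
Lemma dval (f : R -> R) (x df : R) : is_derive x (1:R) f df -> 'D_1 f x = df.
Proof. by move=> H; exact: (@derive_val _ _ _ _ _ _ _ H). Qed.

Lemma der_expM (mu s : R) :
  is_derive s (1:R) (fun s => expR (mu * s)) (mu * expR (mu * s)).
Proof.
have hl : is_derive s (1:R) ( *%R mu) mu.
  by apply: is_derive_eq (is_deriveZ mu (is_derive_id s 1)) _; rewrite /GRing.scale /= mulr1.
have he : derivable (@expR R) (mu * s) 1 := exd (is_derive_expR _).
have hd : derivable (expR \o ( *%R mu)) s 1.
  apply/derivable1_diffP; apply: differentiable_comp.
    exact/derivable1_diffP/(exd hl).
  exact/derivable1_diffP.
have hc := derive1_comp (exd hl) he.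
have := derivableP hd; rewrite -derive1E hc.
by rewrite !derive1E (dval hl) (dval (is_derive_expR _)) mulrC.
Qed.

Lemma decay (f df : R -> R) (mu : R) :
  (forall t, is_derive t (1:R) f (df t)) -> (forall t, df t <= - mu * f t) ->
  forall t, 0 <= t -> f t <= f 0 * expR (- (mu * t)).
Proof.
move=> hf hdf t ht.
set g := fun s => f s * expR (mu * s).
have hg : forall s, is_derive s (1:R) g (df s * expR (mu * s) + f s * (mu * expR (mu * s))).
  by move=> s; exact: (der_prod (hf s) (der_expM mu s)).
have [c _ hc] := MVT_segment ht (fun x _ => hg x)
   (derivable_within_continuous (fun x _ => exd (hg x))).
have hle : g t <= g 0.
  rewrite -subr_le0 hc; apply: mulr_le0_ge0; last by rewrite subr0.
  have -> : df c * expR (mu * c) + f c * (mu * expR (mu * c)) = (df c + mu * f c) * expR (mu * c) by ring.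
  apply: mulr_le0_ge0; last exact: expR_ge0.
  by have := hdf c; rewrite mulNr; lra.
move: hle; rewrite /g mulr0 expR0 mulr1 => hle.
have -> : f t = f t * expR (mu * t) * expR (- (mu * t)).
  by rewrite -mulrA expRxMexpNx_1 mulr1.
by rewrite ler_pM2r // expR_gt0.
Qed.


Lemma ip0l m (y : 'cV[C]_m) : ip 0 y = 0.
Proof. by rewrite /ip big1 // => i _; rewrite mxE /= !mul0r addr0. Qed.

Lemma posdef_ip m (Q : 'M[C]_m) v : posdef Q -> 0 <= ip v (Q *m v).
Proof.
move=> [_ hQ]; have [->|vn0] := eqVneq v 0; first by rewrite ip0l.
have := hQ v vn0; rewrite ltcE => /andP[_ h].
by rewrite ipE mulmxA ltW.
Qed.

Lemma psd_ip m (X : 'M[C]_m) v : psd X -> 0 <= ip v (X *m v).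
Proof.
move=> [_ hX]; have := hX v; rewrite lecE => /andP[_ h].
by rewrite ipE mulmxA.
Qed.

Lemma ip_scal2 m (v : 'cV[C]_m) : ip v (2%:M *m v) = 2 * nsq v.
Proof.
rewrite mul_scalar_mx (_ : (2 : C) = (2:R)%:C%C).
  by rewrite ipZ ip_self.
by rewrite rmorph_nat.
Qed.

Lemma loew_ip m (X : 'M[C]_m) v : loewner_ge X 2%:M -> 2 * nsq v <= ip v (X *m v).
Proof.
move=> h; have := psd_ip v h.
by rewrite mulmxBl ipD ipN ip_scal2 subr_ge0.
Qed.

Lemma nsq_bound m (M : 'M[C]_m) v : nsq (M *m v) <= specnorm M ^+ 2 * nsq v.
Proof.
have h := specnorm_bound M v.
have h0 : 0 <= vnorm (M *m v) by rewrite vnormE sqrtr_ge0.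
have h1 : `|vnorm (M *m v)| <= specnorm M * vnorm v by rewrite ger0_norm.
have := sq_le h1.
by rewrite exprMn !vnormE !sqr_sqrtr ?nsq_ge0.
Qed.


Lemma amgm_bound m (M : 'M[C]_m) v : 2 * ip v (M *m v) <= (1 + specnorm M ^+ 2) * nsq v.
Proof.
have h1 := amgm v (M *m v) ltr01.
have h2 := nsq_bound M v.
rewrite mul1r divr1 in h1.
rewrite mulrDl mul1r; lra.
Qed.

Lemma arith (j n p qv ns kap S del eps mu eta : R) :
  eta = 1 - kap * S -> 0 <= ns -> ns <= j ->
  kap * (2 * n) <= kap * ((2 * S + del) * ns) -> kap * del * ns <= eta * ns ->
  eps * (2 * p) <= eta / 2 * ns -> mu * (2 * qv) + mu * (2 * eps * ns) <= eta * ns ->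
  1 * ((- j + kap * n) + (- j + kap * n)) + eps * (p + p) <= - mu * (1 * qv + eps * ns).
Proof. move=> ->; lra. Qed.

Lemma arith2 (x y z a b c : R) :
  x * (2 * a) <= x * (c * b) -> x * ((c / 2 + y) * b) = z / 2 * b ->
  x * (2 * a) + x * (2 * y * b) <= z * b.
Proof. move=> h1 h2; lra. Qed.

Lemma stab m (J N Q : 'M[C]_m) (kap : R) :
  posdef Q -> loewner_ge (Q *m J + ctr J *m Q) 2%:M -> 0 <= kap ->
  kap * specnorm (Q *m N) < 1 ->
  exp_stable (- J + kap%:C%C *: N).
Proof.
move=> hQ hQJ hk hS.
set A := - J + kap%:C%C *: N.
set S := specnorm (Q *m N).
set SA := specnorm A. set SQ := specnorm Q.
have S0 : 0 <= S := specnorm_ge0 _.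
set eta := 1 - kap * S.
have eta0 : 0 < eta by rewrite subr_gt0.
have k1 : 0 < kap + 1 by lra.
set del := eta / (kap + 1).
have del0 : 0 < del by rewrite divr_gt0.
have kdel : kap * del <= eta.
  rewrite /del mulrA ler_pdivrMr //; lra.
have SA1 : 0 < 1 + SA ^+ 2 by have := sqr_ge0 SA; lra.
set eps := eta / (2 * (1 + SA ^+ 2)).
have eps0 : 0 < eps by rewrite divr_gt0 // mulr_gt0.
have epsE : eps * (1 + SA ^+ 2) = eta / 2 by rewrite /eps; field; rewrite gt_eqF.
set K := (1 + SQ ^+ 2) / 2 + eps.
have K0 : 0 < K by have := sqr_ge0 SQ; rewrite /K; lra.
set mu := eta / (2 * K).
have mu0 : 0 < mu by rewrite divr_gt0 // mulr_gt0.
have muE : mu * K = eta / 2 by rewrite /mu; field; rewrite gt_eqF.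
have hQv : forall v, 0 <= ip v (Q *m v) by move=> v; exact: posdef_ip.
have hJv : forall v : 'cV[C]_m, nsq v <= ip v (Q *m (J *m v)).
  move=> v; have := loew_ip v hQJ.
  rewrite mulmxDl ipD -!mulmxA ip_ctr [ip (J *m v) _]ip_herm; last exact: hQ.1.
  by rewrite ip_sym => h; lra.
have hNv : forall v : 'cV[C]_m, 2 * ip v (Q *m (N *m v)) <= (2 * S + del) * nsq v.
  move=> v; have sp : 0 < S + del by lra.
  have := amgm v (Q *m (N *m v)) sp.
  have h1 := nsq_bound (Q *m N) v; rewrite -mulmxA in h1.
  have h2 : nsq (Q *m (N *m v)) / (S + del) <= S * nsq v.
    rewrite ler_pdivrMr //.
    have : 0 <= S * del * nsq v by apply: mulr_ge0; [apply: mulr_ge0 => //; exact: ltW | exact: nsq_ge0].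
    move: h1; rewrite expr2 => h1 h3.
    have := nsq_ge0 v => h4.
    rewrite -/S in h1.
    have -> : S * nsq v * (S + del) = S * S * nsq v + S * del * nsq v by ring.
    lra.
  have := nsq_ge0 v => h4.
  lra.
have hAv : forall v : 'cV[C]_m, 2 * ip v (A *m v) <= (1 + SA ^+ 2) * nsq v.
  by move=> v; exact: amgm_bound.
have hQv2 : forall v : 'cV[C]_m, 2 * ip v (Q *m v) <= (1 + SQ ^+ 2) * nsq v.
  by move=> v; exact: amgm_bound.
have hdec : forall v : 'cV[C]_m,
    ip v (Q *m (A *m v)) = - ip v (Q *m (J *m v)) + kap * ip v (Q *m (N *m v)).
  by move=> v; rewrite /A mulmxDl mulNmx -scalemxAl mulmxDr mulmxN -scalemxAr ipD ipN ipZ.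
exists (Num.sqrt (K / eps)), (mu / 2); split; first by rewrite sqrtr_gt0 divr_gt0.
split; first by rewrite divr_gt0.
move=> q hq t ht.
have hd : forall s, hasder q s (A *m q s) := fun s i => hq s i.
set W := fun s => 1 * ip (q s) (Q *m q s) + eps * ip (q s) (q s).
set dW := fun s => 1 * (ip (A *m q s) (Q *m q s) + ip (q s) (Q *m (A *m q s)))
                   + eps * (ip (A *m q s) (q s) + ip (q s) (A *m q s)).
have hW : forall s, is_derive s (1:R) W (dW s).
  move=> s; exact: (der_lin 1 eps (hasder_ip (hd s) (hasder_mul Q (hd s))) (hasder_ip (hd s) (hd s))).
have hdW : forall s, dW s <= - mu * W s.
  move=> s; rewrite /dW /W.
  set v := q s.
  rewrite (ip_herm _ _ hQ.1) (ip_sym (Q *m _)) (ip_sym (A *m v)) hdec ip_self.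
  have h6 := nsq_ge0 v.
  apply: (@arith _ _ _ _ (nsq v) kap S del eps mu eta _ h6 (hJv v)); first by [].
  - by rewrite ler_wpM2l.
  - exact: ler_wpM2r.
  - have h8 : eps * (2 * ip v (A *m v)) <= eps * ((1 + SA ^+ 2) * nsq v).
      exact: (ler_wpM2l (ltW eps0) (hAv v)).
    by rewrite [eps * (_ * nsq v)]mulrA epsE in h8.
  - have h9 : mu * (2 * ip v (Q *m v)) <= mu * ((1 + SQ ^+ 2) * nsq v) by rewrite ler_wpM2l // ltW.
    have h12 : mu * (((1 + SQ ^+ 2) / 2 + eps) * nsq v) = eta / 2 * nsq v by rewrite mulrA muE.
    exact: arith2 h9 h12.
have hdecay := decay hW hdW ht.
have hWt : eps * nsq (q t) <= W t by rewrite /W ip_self; have := hQv (q t); lra.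
have hW0 : W 0 <= K * nsq (q 0).
  rewrite /W ip_self /K; have := hQv2 (q 0); lra.
have hn : nsq (q t) <= K / eps * nsq (q 0) * expR (- (mu * t)).
  have h : eps * nsq (q t) <= K * nsq (q 0) * expR (- (mu * t)).
    exact: (le_trans hWt (le_trans hdecay (ler_wpM2r (expR_ge0 _) hW0))).
  rewrite -(ler_pM2l eps0).
  have -> : eps * (K / eps * nsq (q 0) * expR (- (mu * t))) = K * nsq (q 0) * expR (- (mu * t)).
    by field; rewrite gt_eqF.
  exact: h.
have hE : expR (- (mu * t)) = expR (- (mu / 2 * t)) ^+ 2.
  by rewrite expr2 -expRD; congr expR; field.
have hKe : 0 <= K / eps by rewrite divr_ge0 // ltW.
have -> : Num.sqrt (K / eps) * expR (- (mu / 2 * t)) * vnorm (q 0)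
    = Num.sqrt (K / eps * nsq (q 0) * expR (- (mu * t))).
  have hn0 : 0 <= K / eps * nsq (q 0) by rewrite mulr_ge0 ?nsq_ge0.
  rewrite hE (sqrtrM _ hn0) (sqrtrM _ hKe) sqrtr_sqr ger0_norm ?expR_ge0 //.
  by rewrite vnormE mulrAC.
rewrite vnormE ler_sqrt //.
exact: mulr_ge0 (mulr_ge0 hKe (nsq_ge0 _)) (expR_ge0 _).
Qed.

Lemma sum_sh2 n (F : 'I_n -> C) : (2 <= n)%N -> (forall j : 'I_n, (j < 2)%N -> F j = 0) ->
  \sum_j F j = \sum_(j : 'I_(n - 2)) F (sh2 j).
Proof.
case: n F => [//|n] F hn hF.
have e1 : \sum_j F j = \sum_(0 <= j < n.+1) F (inord j).
  by rewrite big_mkord; apply: eq_bigr => j _; rewrite inord_val.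
have e2 : \sum_(j : 'I_(n.+1 - 2)) F (sh2 j) = \sum_(0 <= j < n.+1 - 2) F (inord (j + 2)).
  rewrite big_mkord; apply: eq_bigr => j _; congr F; apply: val_inj.
  by rewrite /= inordK // (lt_sub2 j).
rewrite e1 e2 (big_cat_nat (n:=2) _ hn) //= (big_addn 0 _ 2).
rewrite [X in X + _]big1_seq ?add0r // => j /andP[_]; rewrite mem_index_iota => /andP[_ hj].
apply: hF; rewrite inordK //; exact: leq_trans hj hn.
Qed.

Lemma ip0r m (x : 'cV[C]_m) : ip x 0 = 0.
Proof. by rewrite ip_sym ip0l. Qed.

Lemma key n (KL T J : 'M[C]_n) (Q : 'M[C]_(n - 2)) :
  T \in unitmx -> T *m KL *m invmx T = J ->
  (forall i j : 'I_n, (i < 2)%N || (j < 2)%N -> J i j = 0) ->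
  posdef Q -> loewner_ge (Q *m sub2 J + ctr (sub2 J) *m Q) 2%:M -> (2 <= n)%N ->
  forall z : 'cV[C]_n, KL *m z = 0 -> forall i, (T *m z) (sh2 i) 0 = 0.
Proof.
move=> hT hJ hJb hQ hQJ hn z hz.
set w := T *m z.
have hw : J *m w = 0.
  by rewrite /w -hJ -!mulmxA mulKmx // hz mulmx0.
set u : 'cV[C]_(n - 2) := \col_i w (sh2 i) 0.
have hu : sub2 J *m u = 0.
  apply/matrixP => i j; rewrite ord1.
  transitivity ((J *m w) (sh2 i) 0); last by rewrite hw !mxE.
  rewrite !mxE (sum_sh2 hn); last by move=> j0 hj0; rewrite hJb ?mul0r // hj0 orbT.
  by apply: eq_bigr => j0 _; rewrite !mxE.
have := loew_ip u hQJ.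
rewrite mulmxDl ipD -!mulmxA ip_ctr [ip (sub2 J *m u) _]ip_herm; last exact: hQ.1.
rewrite hu mulmx0 ip0r ip0l addr0 => h.
have hn0 : nsq u = 0 by apply/eqP; rewrite eq_le nsq_ge0 andbT; lra.
move=> i; have := congr1 (fun M : 'cV[C]_(n - 2) => M i 0) (nsq_eq0 hn0); rewrite !mxE.
by [].
Qed.

End Aux.

Theorem proposition1 (R : realType) (n : nat) (hn : (3 <= n)%N)
  (adj : rel 'I_n) (adj_sym : symmetric adj) (adj_irr : irreflexive adj)
  (pstar : 'cV[R[i]]_n)
  (hpstar : forall c : R[i], pstar != c *: const_mx 1)
  (w : 'I_n -> 'I_n -> R[i]) (hw : forall i j, adj i j -> w i j != 0)
  (hwp : forall i : 'I_n, \sum_(j | adj i j) w i j * (pstar i 0 - pstar j 0) = 0)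
  (hLmult : mup 0 (char_poly (claplacian adj w)) = 2%N)
  (hLker : forall x : 'cV[R[i]]_n, claplacian adj w *m x = 0 <->
             exists a b : R[i], x = a *: const_mx 1 + b *: pstar)
  (k : 'I_n -> R[i]) (hk : forall i, k i != 0)
  (hKLmult : mup 0 (char_poly (diag_mx (\row_i k i) *m claplacian adj w)) = 2%N)
  (hKLspec : forall z : R[i], root (char_poly (diag_mx (\row_i k i) *m claplacian adj w)) z ->
             z != 0 -> 0 < complex.Re z)
  (T J : 'M[R[i]]_n) (hT : T \in unitmx)
  (hJ : T *m (diag_mx (\row_i k i) *m claplacian adj w) *m invmx T = J)
  (hJjordan : is_jordan J)
  (hJblock : forall i j : 'I_n, (i < 2)%N || (j < 2)%N -> J i j = 0)
  (P : 'M[R[i]]_n)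
  (hP : forall x : 'cV[R[i]]_n,
      (forall s : 'cV[R[i]]_n, diag_mx (\row_i k i) *m claplacian adj w *m s = 0 ->
          ctr s *m (P *m x) = 0) /\
      diag_mx (\row_i k i) *m claplacian adj w *m (x - P *m x) = 0)
  (e : nat) (tl hd : 'I_e -> 'I_n) (horient : orientation adj tl hd)
  (mut mur mus : 'I_n -> 'I_n -> R[i]) (vstar : R[i]) (a om : R)
  (hMt : motionM tl hd mut *m (incidence R tl hd)^T *m pstar = vstar *: const_mx 1)
  (hMr : motionM tl hd mur *m (incidence R tl hd)^T *m pstar = (0 +i* om)%C *: pstar)
  (hMs : motionM tl hd mus *m (incidence R tl hd)^T *m pstar = (a%:C)%C *: pstar)
  (kt kr ks : R) (hkt : 0 < kt) (hkr : 0 < kr) (hks : 0 < ks)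
  (Q : 'M[R[i]]_(n - 2)) (hQ : posdef Q)
  (hQJ : loewner_ge (Q *m sub2 J + ctr (sub2 J) *m Q) (2%:M))
  (kap : R) (hkap0 : 0 <= kap) :
  let Mtil := (kt%:C)%C *: motionM tl hd mut + (kr%:C)%C *: motionM tl hd mur
              + (ks%:C)%C *: motionM tl hd mus in
  let B := incidence R tl hd in
  kap * specnorm (Q *m sub2 (T *m (Mtil *m B^T) *m invmx T)) < 1 ->
  exp_stable (- sub2 J + (kap%:C)%C *: sub2 (T *m P *m (Mtil *m B^T) *m invmx T)).
Proof.
move=> Mtil B hS.
have hn2 : (2 <= n)%N by apply: ltnW.
have Heq : sub2 (T *m P *m (Mtil *m B^T) *m invmx T) = sub2 (T *m (Mtil *m B^T) *m invmx T).
  apply/matrixP => i j; rewrite [LHS]mxE [RHS]mxE.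
  have hz := (hP (col (sh2 j) (Mtil *m B^T *m invmx T))).2.
  have := key hT hJ hJblock hQ hQJ hn2 hz i.
  rewrite !colE mulmxBr !mulmxA -!colE !mxE => /eqP; rewrite subr_eq0 => /eqP h.
  exact: esym h.
rewrite Heq; exact: stab hQ hQJ hkap0 hS.
Qed.
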